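(* Let $\theta$ be an ordered partial action of a groupoid $\mathcal{G}$ on a semilatticeoid $X$. Then the semidirect product $\mathcal{G}\ltimes_\theta X$ is an $E$-unitary inverse semigroupoid.
   Context: Inverse semigroupoid: arrows $\mathcal{S}$, objects $\mathcal{S}^{(0)}$, maps $d,c$, associative multiplication on $\mathcal{S}^{(2)}=\{(s,t):d(s)=c(t)\}$ with $d(st)=d(t)$, $c(st)=c(s)$, unique $s^*$ with $ss^*s=s$, $s^*ss^*=s^*$; natural order on parallel arrows $s\leqslant t$ iff $s=te$ for an idempotent $e$; $(s,t)\in\sigma$ iff some $r\leqslant s,t$; $E$-unitary: $(s,e)\in\sigma$, $e$ idempotent imply $s$ idempotent. A groupoid is an inverse semigroupoid with exactly one idempotent over each object. A semilatticeoid is an inverse semigroupoid all of whose elements are idempotent, with its natural order. A partial action of $\mathcal{G}$ on $X$ is a pair $(\{X_g\},\{\theta_g\})$, $X_g\subseteq X$, $\theta_g:X_{g^{*}}\to X_g$ bijections with $\theta_g^{-1}=\theta_{g^*}$, $X=\bigcup X_g$, $\theta_g\circ\theta_h\subseteq\theta_{gh}$ for composable $(g,h)$, $X_g\subseteq X_h$ if $g\leqslant h$; ordered if each $X_g$ is an order ideal and each $\theta_g$ an order isomorphism; assume $X_g\ne\emptyset$. Semidirect product: $\mathcal{G}\ltimes_\theta X=\{(g,x): x\in X_{g^*}\}$ with objects $\mathcal{G}^{(0)}\times X^{(0)}$, $d(g,x)=(d(g),d(x))$, $c(g,x)=(c(g),c(\theta_g(x)))$, product $(g,x)(h,y)=(gh,\theta_{h^*}(x\theta_h(y)))$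 defined when $(g,h)$ composable and $(x,\theta_h(y))\in X^{(2)}$. *)

(* Defs.v *)
From Stdlib Require Import ClassicalDescription.

(* Raw semigroupoid data: arrows, objects, domain/codomain maps and a
   multiplication.  The multiplication is a total function; only its values
   on composable pairs (d s = c t) are meaningful. *)
Record sgd := Sgd {
  arr : Type;
  obj : Type;
  dm  : arr -> obj;
  cd  : arr -> obj;
  mul : arr -> arr -> arr }.

Arguments dm {s}.
Arguments cd {s}.
Arguments mul {s}.

Section Basic.
Variable S : sgd.

Definition composable (s t : arr S) : Prop := dm s = cd t.

Definition semigroupoid : Prop :=
  (forall s t, composable s t -> dm (mul s t) = dm t /\ cd (mul s t) = cd s) /\
  (forall s t u, composable s t -> composable t u ->
     mul (mul s t) u = mul s (mul t u)).

Definition is_inverse (s t : arr S) : Prop :=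
  composable s t /\ composable t s /\
  mul (mul s t) s = s /\ mul (mul t s) t = t.

Definition inverse_semigroupoid : Prop :=
  semigroupoid /\ forall s, exists! t, is_inverse s t.

Definition idempotent (e : arr S) : Prop := composable e e /\ mul e e = e.

Definition nat_le (s t : arr S) : Prop :=
  dm s = dm t /\ cd s = cd t /\
  exists e, idempotent e /\ composable t e /\ s = mul t e.

Definition sigma_rel (s t : arr S) : Prop := exists r, nat_le r s /\ nat_le r t.

Definition E_unitary : Prop :=
  forall s e, sigma_rel s e -> idempotent e -> idempotent s.

Definition groupoid : Prop :=
  inverse_semigroupoid /\
  forall o : obj S, exists! e, idempotent e /\ dm e = o /\ cd e = o.

Definition semilatticeoid : Prop :=
  inverse_semigroupoid /\ forall x, idempotent x.
End Basic.

Section Action.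
Variables (G X : sgd).
(* ginv g = g^*  ;  Xd g x  means  x \in X_g  ;  th g = theta_g *)
Variables (ginv : arr G -> arr G) (Xd : arr G -> arr X -> Prop)
          (th : arr G -> arr X -> arr X).

Definition partial_action : Prop :=
  (forall g x, Xd (ginv g) x -> Xd g (th g x)) /\
  (forall g x y, Xd (ginv g) x -> Xd (ginv g) y -> th g x = th g y -> x = y) /\
  (forall g y, Xd g y -> exists x, Xd (ginv g) x /\ th g x = y) /\
  (forall g x, Xd (ginv g) x -> th (ginv g) (th g x) = x) /\
  (forall x, exists g, Xd g x) /\
  (forall g h, composable G g h -> forall x,
      Xd (ginv h) x -> Xd (ginv g) (th h x) ->
      Xd (ginv (mul g h)) x /\ th (mul g h) x = th g (th h x)) /\
  (forall g h, nat_le G g h -> forall x, Xd g x -> Xd h x) /\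
  (forall g, exists x, Xd g x).

Definition ordered_partial_action : Prop :=
  partial_action /\
  (forall g x y, nat_le X x y -> Xd g y -> Xd g x) /\
  (forall g x y, Xd (ginv g) x -> Xd (ginv g) y ->
      (nat_le X x y <-> nat_le X (th g x) (th g y))).

Definition sdp_arr : Type := { p : arr G * arr X | Xd (ginv (fst p)) (snd p) }.

Definition sdp_dm (p : sdp_arr) : obj G * obj X :=
  (dm (fst (proj1_sig p)), dm (snd (proj1_sig p))).

Definition sdp_cd (p : sdp_arr) : obj G * obj X :=
  (cd (fst (proj1_sig p)), cd (th (fst (proj1_sig p)) (snd (proj1_sig p)))).

(* (g,x)(h,y) = (gh, theta_{h*}(x theta_h(y))) when (g,h) is composable and
   (x, theta_h y) in X^(2); junk value (g,x) otherwise. *)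
Definition sdp_mul (p q : sdp_arr) : sdp_arr :=
  let g := fst (proj1_sig p) in let x := snd (proj1_sig p) in
  let h := fst (proj1_sig q) in let y := snd (proj1_sig q) in
  let z := th (ginv h) (mul x (th h y)) in
  match excluded_middle_informative
          (composable G g h /\ composable X x (th h y) /\ Xd (ginv (mul g h)) z)
  with
  | left H => exist (fun r : arr G * arr X => Xd (ginv (fst r)) (snd r))
                    (mul g h, z) (proj2 (proj2 H))
  | right _ => p
  end.

Definition semidirect : sgd := Sgd sdp_arr (obj G * obj X) sdp_dm sdp_cd sdp_mul.
End Action.

(* Main.v *)
Require Import Defs.
From Stdlib Require Import ProofIrrelevance ClassicalDescription.

Theorem mainTheorem11 (G X : sgd) (ginv : arr G -> arr G)
  (Xd : arr G -> arr X -> Prop) (th : arr G -> arr X -> arr X) :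
  groupoid G ->
  (forall g, is_inverse G g (ginv g)) ->
  semilatticeoid X ->
  ordered_partial_action G X ginv Xd th ->
  inverse_semigroupoid (semidirect G X ginv Xd th) /\
  E_unitary (semidirect G X ginv Xd th).
Proof.
  intros HG Hinv HX HA.
  destruct HG as [[[GSd GSa] GU] Gid].
  destruct HX as [[[XSd XSa] XU] Xid].
  destruct HA as [[A1 [A2 [A3 [A4 [A5 [A6 [A7 A8]]]]]]] [Aideal Aiso]].
  assert (Ginv_unique : forall g h, is_inverse G g h -> h = ginv g).
  { intros g h H. destruct (GU g) as [t [_ Hu]].
    transitivity t; [symmetry; apply Hu; exact H | apply Hu; apply Hinv]. }
  assert (Hii : forall g, ginv (ginv g) = g).
  { intros g. symmetry. apply Ginv_unique.
    destruct (Hinv g) as [H1 [H2 [H3 H4]]]. repeat split; assumption. }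
  assert (Gidem : forall s f, idempotent G f -> composable G s f -> mul s f = s).
  { intros s f [Hff Hf2] Hsf.
    destruct (Hinv s) as [Hc1 [Hc2 [H3 H4]]].
    unfold composable in *.
    destruct (Gid (dm s)) as [e [_ He]].
    assert (Ef : e = f).
    { apply He. split; [split; [exact Hff | exact Hf2] | split; congruence]. }
    assert (Ee : e = mul (ginv s) s).
    { apply He.
      destruct (GSd _ _ Hc2) as [D1 D2].
      split; [split|split].
      - unfold composable. rewrite D1, D2. congruence.
      - rewrite <- (GSa (mul (ginv s) s) (ginv s) s); [rewrite H4; reflexivity| |exact Hc2].
        unfold composable. rewrite D1. exact Hc1.
      - exact D1.
      - rewrite D2. congruence. }
    subst f. rewrite Ee. rewrite <- GSa by assumption. exact H3. }
  assert (Xloop : forall x, dm x = cd x) by (intro x; apply (Xid x)).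
  assert (XD : forall (o : obj X) (a b : arr X), dm a = o -> dm b = o -> dm (mul a b) = o).
  { intros o a b Ha Hb. rewrite (proj1 (XSd a b ltac:(unfold composable; rewrite <- Xloop; congruence))). exact Hb. }
  assert (XA : forall (o : obj X) (a b c : arr X), dm a = o -> dm b = o -> dm c = o ->
             mul (mul a b) c = mul a (mul b c)).
  { intros o a b c Ha Hb Hc. apply XSa; unfold composable; rewrite <- Xloop; congruence. }
  assert (Xmm : forall x, mul x x = x) by (intro x; apply (Xid x)).
  Ltac xo XD := solve [repeat apply XD; assumption].
  assert (Xcomm : forall (o : obj X) (x y : arr X), dm x = o -> dm y = o -> mul x y = mul y x).
  { intros o x y Hx Hy.
    destruct (XU (mul x y)) as [t [_ Hu]].
    assert (Da : dm (mul x y) = o) by xo XD.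
    assert (Db : dm (mul y x) = o) by xo XD.
    transitivity t; [symmetry|]; apply Hu.
    - unfold is_inverse, composable. rewrite !Xmm. rewrite <- Xloop. repeat split; auto.
    - unfold is_inverse, composable. rewrite <- !Xloop. repeat split; try congruence.
      + rewrite (XA o x y (mul y x)) by xo XD.
        rewrite <- (XA o y y x) by xo XD. rewrite Xmm.
        rewrite (XA o x (mul y x) (mul x y)) by xo XD.
        rewrite (XA o y x (mul x y)) by xo XD.
        rewrite <- (XA o x x y) by xo XD. rewrite Xmm.
        rewrite <- (XA o x y (mul x y)) by xo XD. apply Xmm.
      + rewrite (XA o y x (mul x y)) by xo XD.
        rewrite <- (XA o x x y) by xo XD. rewrite Xmm.
        rewrite (XA o y (mul x y) (mul y x)) by xo XD.
        rewrite (XA o x y (mul y x)) by xo XD.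
        rewrite <- (XA o y y x) by xo XD. rewrite Xmm.
        rewrite <- (XA o y x (mul y x)) by xo XD. apply Xmm. }
  assert (Xle_iff : forall s t, nat_le X s t <-> dm s = dm t /\ mul t s = s).
  { intros s t. split.
    - intros [Hd [Hc [e [[Hee Hee2] [Hte Hs]]]]]. split; [exact Hd|].
      subst s. unfold composable in *.
      rewrite <- (XA (dm t) t t e); [rewrite Xmm; reflexivity|reflexivity|reflexivity|].
      rewrite Xloop. congruence.
    - intros [Hd Hm]. split; [exact Hd|]. split; [rewrite <- !Xloop; exact Hd|].
      exists s. split; [apply Xid|]. split; [unfold composable; rewrite <- Xloop; congruence|].
      symmetry; exact Hm. }
  assert (Xrefl : forall x, nat_le X x x).
  { intro x. apply Xle_iff. split; [reflexivity|apply Xmm]. }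
  assert (Xtrans : forall a b c, nat_le X a b -> nat_le X b c -> nat_le X a c).
  { intros a b c H1 H2. apply Xle_iff in H1. apply Xle_iff in H2.
    destruct H1 as [D1 M1]; destruct H2 as [D2 M2]. apply Xle_iff.
    split; [congruence|].
    rewrite <- M1 at 1. rewrite <- (XA (dm a) c b a) by congruence. rewrite M2. exact M1. }
  assert (Xanti : forall a b, nat_le X a b -> nat_le X b a -> a = b).
  { intros a b H1 H2. apply Xle_iff in H1. apply Xle_iff in H2.
    destruct H1 as [D1 M1]; destruct H2 as [D2 M2].
    transitivity (mul b a); [symmetry; exact M1|].
    transitivity (mul a b); [apply (Xcomm (dm a)); congruence|exact M2]. }
  assert (Xext : forall a b, (forall t, nat_le X t a <-> nat_le X t b) -> a = b).
  { intros a b H. apply Xanti; [apply (H a); apply Xrefl | apply (H b); apply Xrefl]. }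
  assert (Xml : forall x y, composable X x y -> nat_le X (mul x y) x).
  { intros x y Hxy. unfold composable in Hxy. rewrite <- Xloop in Hxy.
    apply Xle_iff. split; [apply (XD (dm x)); congruence|].
    rewrite <- (XA (dm x) x x y) by congruence. rewrite Xmm; reflexivity. }
  assert (Xmr : forall x y, composable X x y -> nat_le X (mul x y) y).
  { intros x y Hxy. unfold composable in Hxy. rewrite <- Xloop in Hxy.
    rewrite (Xcomm (dm x) x y) by congruence.
    apply Xle_iff. split; [apply (XD (dm y)); congruence|].
    rewrite <- (XA (dm x) y y x) by congruence. rewrite Xmm; reflexivity. }
  assert (Xglb : forall t x y, nat_le X t x -> nat_le X t y -> nat_le X t (mul x y)).
  { intros t x y H1 H2. apply Xle_iff in H1. apply Xle_iff in H2.
    destruct H1 as [D1 M1]; destruct H2 as [D2 M2]. apply Xle_iff.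
    split; [symmetry; apply (XD (dm t)); congruence|].
    rewrite (XA (dm t) x y t) by congruence. rewrite M2. exact M1. }

  assert (KEY : forall p q : sdp_arr G X ginv Xd,
    composable (semidirect G X ginv Xd th) p q ->
    exists z, proj1_sig (sdp_mul G X ginv Xd th p q)
                = (mul (fst (proj1_sig p)) (fst (proj1_sig q)), z)
      /\ Xd (ginv (fst (proj1_sig q))) z
      /\ (forall t, nat_le X t z <-> nat_le X t (snd (proj1_sig q)) /\
                      nat_le X (th (fst (proj1_sig q)) t) (snd (proj1_sig p)))
      /\ dm z = dm (snd (proj1_sig q))
      /\ cd (th (mul (fst (proj1_sig p)) (fst (proj1_sig q))) z)
           = cd (th (fst (proj1_sig p)) (snd (proj1_sig p)))).
  { intros [[g x] Hx] [[h y] Hy] Hpq. cbn [fst snd proj1_sig] in *.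
    unfold composable in Hpq. cbn in Hpq. injection Hpq as E1 E2.
    assert (Hb : Xd h (th h y)) by (apply A1; exact Hy).
    assert (Hc : composable X x (th h y)) by exact E2.
    pose proof (Xml _ _ Hc) as Hux. pose proof (Xmr _ _ Hc) as Hub.
    assert (Hu1 : Xd (ginv g) (mul x (th h y))) by exact (Aideal _ _ _ Hux Hx).
    assert (Hu2 : Xd (ginv (ginv h)) (mul x (th h y))) by (rewrite Hii; exact (Aideal _ _ _ Hub Hb)).
    assert (Hz : Xd (ginv h) (th (ginv h) (mul x (th h y)))) by (apply A1; exact Hu2).
    assert (Hthz : th h (th (ginv h) (mul x (th h y))) = mul x (th h y)).
    { pose proof (A4 _ _ Hu2) as H. rewrite Hii in H. exact H. }
    assert (Hcomp := A6 g h E1 _ Hz ltac:(rewrite Hthz; exact Hu1)).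
    destruct Hcomp as [Hcomp1 Hcomp2].
    assert (Hzy : nat_le X (th (ginv h) (mul x (th h y))) y).
    { apply (Aiso h); [exact Hz|exact Hy|]. rewrite Hthz. exact Hub. }
    exists (th (ginv h) (mul x (th h y))).
    split; [|split; [exact Hz|split; [|split]]].
    - unfold sdp_mul. cbn [fst snd proj1_sig].
      destruct (excluded_middle_informative _) as [H|H]; [reflexivity|].
      exfalso; apply H. split; [exact E1|split; [exact E2|exact Hcomp1]].
    - intro t. split.
      + intro Ht. split; [eapply Xtrans; eassumption|].
        assert (Htd : Xd (ginv h) t) by exact (Aideal _ _ _ Ht Hz).
        apply (Aiso h _ _ Htd Hz) in Ht. rewrite Hthz in Ht.
        eapply Xtrans; eassumption.
      + intros [Ht1 Ht2].
        assert (Htd : Xd (ginv h) t) by exact (Aideal _ _ _ Ht1 Hy).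
        apply (Aiso h _ _ Htd Hz). rewrite Hthz. apply Xglb; [exact Ht2|].
        apply (Aiso h _ _ Htd Hy). exact Ht1.
    - apply Hzy.
    - rewrite Hcomp2, Hthz. apply (Aiso g _ _ Hu1 Hx). exact Hux. }
  assert (Heq : forall p q : sdp_arr G X ginv Xd, proj1_sig p = proj1_sig q -> p = q).
  { intros [p Hp] [q Hq]. cbn. intros ->. f_equal. apply proof_irrelevance. }

  assert (HcG : forall p q : sdp_arr G X ginv Xd,
    composable (semidirect G X ginv Xd th) p q ->
    composable G (fst (proj1_sig p)) (fst (proj1_sig q)) /\
    composable X (snd (proj1_sig p)) (th (fst (proj1_sig q)) (snd (proj1_sig q)))).
  { intros [[g x] Hx] [[h y] Hy] H. unfold composable in H. cbn in H.
    injection H as E1 E2. split; assumption. }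
  assert (Hsd : forall s t : sdp_arr G X ginv Xd,
    composable (semidirect G X ginv Xd th) s t ->
    sdp_dm G X ginv Xd (sdp_mul G X ginv Xd th s t) = sdp_dm G X ginv Xd t /\
    sdp_cd G X ginv Xd th (sdp_mul G X ginv Xd th s t) = sdp_cd G X ginv Xd th s).
  { intros s t Hst. destruct (KEY s t Hst) as [z [E [Hz [Hch [Hdm Hcd]]]]].
    destruct (HcG s t Hst) as [E1 E2].
    unfold sdp_dm, sdp_cd. rewrite E. cbn [fst snd].
    destruct (GSd _ _ E1) as [F1 F2]. rewrite F1, F2, Hdm, Hcd. split; reflexivity. }
  assert (Hthid : forall g y, idempotent G g -> Xd (ginv g) y -> th g y = y).
  { intros g y [Hgg Hgg2] Hy.
    assert (Eg : ginv g = g).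
    { symmetry. apply Ginv_unique. unfold is_inverse. rewrite !Hgg2. repeat split; assumption. }
    assert (Hy1 : Xd (ginv g) (th g y)) by (rewrite Eg; apply A1; exact Hy).
    destruct (A6 g g Hgg y Hy Hy1) as [_ Hc]. rewrite Hgg2 in Hc.
    apply (A2 g _ _ Hy1 Hy); symmetry; exact Hc. }
  assert (Hidem : forall p : sdp_arr G X ginv Xd,
     idempotent (semidirect G X ginv Xd th) p -> idempotent G (fst (proj1_sig p))).
  { intros p [Hpp Hpp2]. destruct (KEY p p Hpp) as [z [E _]].
    destruct (HcG p p Hpp) as [E1 _].
    apply (f_equal (@proj1_sig _ _)) in Hpp2. cbn [mul semidirect] in Hpp2.
    rewrite E in Hpp2. split; [exact E1|].
    apply (f_equal fst) in Hpp2. exact Hpp2. }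
  split; [split; [split|]|].
  - intros s t Hst. exact (Hsd s t Hst).
  - intros s t u Hst Htu. cbn [mul semidirect].
    destruct (KEY s t Hst) as [z1 [E1 [Hz1 [C1 [D1 Cd1]]]]].
    assert (Hstu : composable (semidirect G X ginv Xd th) (sdp_mul G X ginv Xd th s t) u).
    { unfold composable. cbn [dm semidirect]. rewrite (proj1 (Hsd s t Hst)). exact Htu. }
    destruct (KEY _ _ Hstu) as [zL [EL [HzL [CL _]]]].
    rewrite E1 in EL, CL. cbn [fst snd] in EL, CL.
    destruct (KEY t u Htu) as [z2 [E2 [Hz2 [C2 _]]]].
    assert (Hs_tu : composable (semidirect G X ginv Xd th) s (sdp_mul G X ginv Xd th t u)).
    { unfold composable. cbn [cd semidirect]. rewrite (proj2 (Hsd t u Htu)). exact Hst. }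
    destruct (KEY _ _ Hs_tu) as [zR [ER [HzR [CR _]]]].
    rewrite E2 in ER, CR. cbn [fst snd] in ER, CR.
    apply Heq. rewrite EL, ER.
    destruct (HcG s t Hst) as [G1 _]. destruct (HcG t u Htu) as [G2 _].
    rewrite (GSa _ _ _ G1 G2). f_equal. apply Xext. intro w.
    rewrite CL, CR, C1, C2.
    destruct t as [[h y] Hy]. destruct u as [[k v] Hv]. cbn [fst snd proj1_sig] in *.
    split.
    + intros [Hw1 [Hw2 Hw3]].
      assert (Xw : Xd (ginv k) w) by exact (Aideal _ _ _ Hw1 Hv).
      assert (Xw2 : Xd (ginv h) (th k w)) by exact (Aideal _ _ _ Hw2 Hy).
      destruct (A6 h k G2 w Xw Xw2) as [_ ->]. tauto.
    + intros [[Hw1 Hw2] Hw3].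
      assert (Xw : Xd (ginv k) w) by exact (Aideal _ _ _ Hw1 Hv).
      assert (Xw2 : Xd (ginv h) (th k w)) by exact (Aideal _ _ _ Hw2 Hy).
      destruct (A6 h k G2 w Xw Xw2) as [_ Hc]. rewrite Hc in Hw3. tauto.
  - intros [[g x] Hx].
    assert (Hq : Xd (ginv (fst (ginv g, th g x))) (snd (ginv g, th g x))).
    { cbn [fst snd]. rewrite Hii. apply A1. exact Hx. }
    destruct (Hinv g) as [Gi1 [Gi2 [Gi3 Gi4]]].
    assert (Hsq : composable (semidirect G X ginv Xd th)
                    (exist _ (g, x) Hx) (exist _ (ginv g, th g x) Hq)).
    { unfold composable. cbn. unfold sdp_dm, sdp_cd. cbn [fst snd proj1_sig]. rewrite (A4 g x Hx). rewrite Xloop, Gi1. reflexivity. }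
    assert (Hqs : composable (semidirect G X ginv Xd th)
                    (exist _ (ginv g, th g x) Hq) (exist _ (g, x) Hx)).
    { unfold composable. cbn. unfold sdp_dm, sdp_cd. cbn [fst snd proj1_sig]. rewrite Xloop, Gi2. reflexivity. }
    exists (exist _ (ginv g, th g x) Hq). split.
    + unfold is_inverse. split; [exact Hsq|split; [exact Hqs|]]. cbn [mul semidirect].
      split.
      * destruct (KEY _ _ Hsq) as [z1 [E1 [Hz1 [C1 _]]]].
        assert (H2 : composable (semidirect G X ginv Xd th)
             (sdp_mul G X ginv Xd th (exist _ (g, x) Hx) (exist _ (ginv g, th g x) Hq))
             (exist _ (g, x) Hx)).
        { unfold composable. cbn [dm semidirect]. rewrite (proj1 (Hsd _ _ Hsq)). exact Hqs. }
        destruct (KEY _ _ H2) as [zL [EL [HzL [CL _]]]].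
        rewrite E1 in EL, CL. cbn [fst snd proj1_sig] in *.
        apply Heq. rewrite EL. cbn [proj1_sig]. rewrite Gi3. f_equal.
        apply Xext. intro t. rewrite CL, C1. split; [tauto|].
        intro Ht. assert (Xt : Xd (ginv g) t) by exact (Aideal _ _ _ Ht Hx).
        rewrite (A4 _ _ Xt). split; [exact Ht|split; [|exact Ht]].
        apply (Aiso g _ _ Xt Hx). exact Ht.
      * destruct (KEY _ _ Hqs) as [z1 [E1 [Hz1 [C1 _]]]].
        assert (H2 : composable (semidirect G X ginv Xd th)
             (sdp_mul G X ginv Xd th (exist _ (ginv g, th g x) Hq) (exist _ (g, x) Hx))
             (exist _ (ginv g, th g x) Hq)).
        { unfold composable. cbn [dm semidirect]. rewrite (proj1 (Hsd _ _ Hqs)). exact Hsq. }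
        destruct (KEY _ _ H2) as [zL [EL [HzL [CL _]]]].
        rewrite E1 in EL, CL. cbn [fst snd proj1_sig] in *.
        apply Heq. rewrite EL. cbn [proj1_sig]. rewrite Gi4. f_equal.
        apply Xext. intro t. rewrite CL, C1. split; [tauto|].
        intro Ht. 
        assert (Xgx : Xd (ginv (ginv g)) (th g x)) by (rewrite Hii; apply A1; exact Hx).
        assert (Xt : Xd (ginv (ginv g)) t) by exact (Aideal _ _ _ Ht Xgx).
        pose proof (A4 _ _ Xt) as Ht2. rewrite Hii in Ht2. rewrite Ht2.
        split; [exact Ht|split; [|exact Ht]].
        rewrite <- (A4 g x Hx). apply (Aiso (ginv g) _ _ Xt Xgx). exact Ht.
    + intros [[h y] Hy] [Hsq' [Hqs' [H1 H2]]].
      cbn [mul semidirect] in H1, H2.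
      destruct (HcG _ _ Hsq') as [Gc1 _]. destruct (HcG _ _ Hqs') as [Gc2 _].
      cbn [fst snd proj1_sig] in Gc1, Gc2.
      destruct (KEY _ _ Hsq') as [z1 [E1 [Hz1 [C1 _]]]].
      assert (K2 : composable (semidirect G X ginv Xd th)
             (sdp_mul G X ginv Xd th (exist _ (g, x) Hx) (exist _ (h, y) Hy))
             (exist _ (g, x) Hx)).
      { unfold composable. cbn [dm semidirect]. rewrite (proj1 (Hsd _ _ Hsq')). exact Hqs'. }
      destruct (KEY _ _ K2) as [zL [EL [HzL [CL _]]]].
      rewrite E1 in EL, CL. cbn [fst snd proj1_sig] in *.
      destruct (KEY _ _ Hqs') as [z1' [E1' [Hz1' [C1' _]]]].
      assert (K2' : composable (semidirect G X ginv Xd th)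
             (sdp_mul G X ginv Xd th (exist _ (h, y) Hy) (exist _ (g, x) Hx))
             (exist _ (h, y) Hy)).
      { unfold composable. cbn [dm semidirect]. rewrite (proj1 (Hsd _ _ Hqs')). exact Hsq'. }
      destruct (KEY _ _ K2') as [zL' [EL' [HzL' [CL' _]]]].
      rewrite E1' in EL', CL'. cbn [fst snd proj1_sig] in *.
      apply (f_equal (@proj1_sig _ _)) in H1. apply (f_equal (@proj1_sig _ _)) in H2.
      rewrite EL in H1. rewrite EL' in H2. cbn [proj1_sig] in H1, H2.
      injection H1 as H1g H1x. injection H2 as H2g H2x.
      assert (Eh : h = ginv g).
      { apply Ginv_unique. unfold is_inverse. repeat split; assumption. }
      subst h.
      assert (L1 : nat_le X (th g x) y).
      { rewrite H1x in CL. destruct (proj1 (CL x) (Xrefl x)) as [_ Hh].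
        apply C1 in Hh. tauto. }
      assert (L2 : nat_le X (th (ginv g) y) x).
      { rewrite H2x in CL'. destruct (proj1 (CL' y) (Xrefl y)) as [_ Hh].
        apply C1' in Hh. tauto. }
      assert (Xy : Xd (ginv g) (th (ginv g) y)) by (apply A1; exact Hy).
      apply (Aiso g _ _ Xy Hx) in L2.
      pose proof (A4 (ginv g) y Hy) as Ey. rewrite Hii in Ey. rewrite Ey in L2.
      apply Heq. cbn [proj1_sig]. f_equal. apply Xanti; assumption.
  - intros s e [r [[_ [_ [f [Hf [Hsf Hr]]]]] [_ [_ [f' [Hf' [Hef' Hr']]]]]]] He.
    pose proof (Hidem f Hf) as Gf. pose proof (Hidem f' Hf') as Gf'.
    pose proof (Hidem e He) as Ge.
    destruct (KEY s f Hsf) as [z [E _]]. destruct (KEY e f' Hef') as [z' [E' _]].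
    destruct (HcG s f Hsf) as [Gsf _]. destruct (HcG e f' Hef') as [Gef _].
    cbn [mul semidirect] in Hr, Hr'.
    rewrite <- Hr in E. rewrite <- Hr' in E'. rewrite E in E'.
    injection E' as Eg _.
    rewrite (Gidem _ _ Gf Gsf), (Gidem _ _ Gf' Gef) in Eg.
    rewrite <- Eg in Ge. clear - Ge KEY Heq Hthid Xloop Xext Aideal.
    destruct s as [[g y] Hy]. cbn [fst snd proj1_sig] in Ge.
    assert (Hss : composable (semidirect G X ginv Xd th)
                    (exist _ (g, y) Hy) (exist _ (g, y) Hy)).
    { unfold composable. cbn. unfold sdp_dm, sdp_cd. cbn [fst snd proj1_sig].
      rewrite (Hthid g y Ge Hy). rewrite Xloop. destruct Ge as [Gc _]. rewrite Gc. reflexivity. }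
    split; [exact Hss|]. cbn [mul semidirect].
    destruct (KEY _ _ Hss) as [z [E [_ [C _]]]]. cbn [fst snd proj1_sig] in *.
    apply Heq. rewrite E. cbn [proj1_sig]. destruct Ge as [Gc Gm]. rewrite Gm. f_equal.
    apply Xext. intro t. rewrite C. split; [tauto|].
    intro Ht. assert (Xt : Xd (ginv g) t) by exact (Aideal _ _ _ Ht Hy).
    rewrite (Hthid g t (conj Gc Gm) Xt). tauto.
Qed.
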